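(* Let $0<p<1/2$, $\delta_1=2\rho(1-\rho)$ and $R_1=\bar R(\delta_1)$. Then \[ -A(\delta_1)-R_1+1-h(\delta_1)=E_0(R_1,p). \]
   Context: Logarithms base 2, $h$ binary entropy, $D(x\|y)=x\log\frac xy+(1-x)\log\frac{1-x}{1-y}$. $\rho=\frac{\sqrt p}{\sqrt p+\sqrt{1-p}}$, $R_{\mathrm{crit}}=1-h(\rho)$, $A(\omega)=\omega\log\big(2\sqrt{p(1-p)}\big)$, and $E_0(R,p)=D(\rho\|p)+R_{\mathrm{crit}}-R$. Further $\tau_\nu(\xi)=\frac12\Big(1-\sqrt{1-4\big(\sqrt{\nu(1-\nu)-\xi(1-\xi)}-\xi\big)^2}\Big)$ and $\bar R(\delta)=1+\min_{\frac12(1-\sqrt{1-2\delta})\le\alpha\le\frac12}\big(h(\tau_\alpha(\delta/2))-h(\alpha)\big)$ (the inverse of the linear programming bound on relative distance). *)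

(* Defs.v *)
From Stdlib Require Import Reals.
From Coquelicot Require Import Coquelicot.
Open Scope R_scope.

Definition log2 (x : R) : R := ln x / ln 2.

(* binary entropy (with the convention 0 log 0 = 0, automatic since ln 0 = 0 in Stdlib) *)
Definition h (x : R) : R := - x * log2 x - (1 - x) * log2 (1 - x).

Definition D (x y : R) : R := x * log2 (x / y) + (1 - x) * log2 ((1 - x) / (1 - y)).

Definition rho (p : R) : R := sqrt p / (sqrt p + sqrt (1 - p)).

Definition Rcrit (p : R) : R := 1 - h (rho p).

Definition A (p omega : R) : R := omega * log2 (2 * sqrt (p * (1 - p))).

Definition E0 (R_ p : R) : R := D (rho p) p + Rcrit p - R_.

Definition tau (nu xi : R) : R :=
  / 2 * (1 - sqrt (1 - 4 * (sqrt (nu * (1 - nu) - xi * (1 - xi)) - xi) ^ 2)).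

Definition Rbar_set (delta : R) (y : R) : Prop :=
  exists alpha, / 2 * (1 - sqrt (1 - 2 * delta)) <= alpha <= / 2 /\
                y = h (tau alpha (delta / 2)) - h alpha.

(* Rbar(delta) = 1 + min_{alpha} (h(tau_alpha(delta/2)) - h(alpha));
   the minimum is expressed as the greatest lower bound (the minimum exists). *)
Definition Rbar_lp (delta : R) : R := 1 + real (Glb_Rbar (Rbar_set delta)).

(* Main.v *)
Require Import Defs.
From Stdlib Require Import Reals Lra.
From Coquelicot Require Import Coquelicot.
Open Scope R_scope.

Theorem lemma16 (p : R) (hp0 : 0 < p) (hp1 : p < / 2) :
  let delta1 := 2 * rho p * (1 - rho p) in
  let R1 := Rbar_lp delta1 in
  - A p delta1 - R1 + 1 - h delta1 = E0 R1 p.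
Proof.
  intros delta1 R1; unfold delta1, R1.
  assert (hs : 0 < sqrt p) by (apply sqrt_lt_R0; lra).
  assert (ht : 0 < sqrt (1 - p)) by (apply sqrt_lt_R0; lra).
  assert (hss : sqrt p * sqrt p = p) by (apply sqrt_sqrt; lra).
  assert (htt : sqrt (1-p) * sqrt (1-p) = 1 - p) by (apply sqrt_sqrt; lra).
  assert (hst : sqrt (p * (1 - p)) = sqrt p * sqrt (1 - p)) by (apply sqrt_mult; lra).
  assert (hr : rho p = sqrt p / (sqrt p + sqrt (1 - p))) by reflexivity.
  set (s := sqrt p) in *. set (t := sqrt (1 - p)) in *.
  assert (hu : 0 < s + t) by lra.
  assert (hl2 : 0 < ln 2) by (rewrite <- ln_1; apply ln_increasing; lra).
  assert (E1 : ln (rho p) = ln s - ln (s + t)).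
  { rewrite hr. apply ln_div; lra. }
  assert (E2 : ln (1 - rho p) = ln t - ln (s + t)).
  { replace (1 - rho p) with (t / (s + t)) by (rewrite hr; field; lra).
    apply ln_div; lra. }
  assert (E3 : ln (2 * rho p * (1 - rho p)) = ln 2 + ln s + ln t - 2 * ln (s + t)).
  { replace (2 * rho p * (1 - rho p)) with ((2 * s * t) / ((s + t) * (s + t)))
      by (rewrite hr; field; lra).
    rewrite ln_div by (apply Rmult_lt_0_compat; try apply Rmult_lt_0_compat; lra).
    rewrite !ln_mult by (try apply Rmult_lt_0_compat; lra). ring. }
  assert (E4 : ln (1 - 2 * rho p * (1 - rho p)) = - (2 * ln (s + t))).
  { replace (1 - 2 * rho p * (1 - rho p)) with (/ ((s + t) * (s + t))).
    - rewrite ln_Rinv by (apply Rmult_lt_0_compat; lra).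
      rewrite ln_mult by lra. ring.
    - rewrite hr. apply Rminus_diag_uniq.
      transitivity ((1 - (s * s + t * t)) / ((s + t) * (s + t))).
      + field. lra.
      + replace (s * s + t * t) with 1 by lra. field. lra. }
  assert (E5 : ln (2 * sqrt (p * (1 - p))) = ln 2 + ln s + ln t).
  { rewrite hst. rewrite !ln_mult by (try apply Rmult_lt_0_compat; lra). ring. }
  assert (Lp : ln p = 2 * ln s).
  { rewrite <- hss, ln_mult by lra. ring. }
  assert (Lq : ln (1 - p) = 2 * ln t).
  { rewrite <- htt, ln_mult by lra. ring. }
  assert (hrp : 0 < rho p) by (rewrite hr; apply Rdiv_lt_0_compat; lra).
  assert (hrq : 0 < 1 - rho p).
  { replace (1 - rho p) with (t / (s + t)) by (rewrite hr; field; lra).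
    apply Rdiv_lt_0_compat; lra. }
  assert (E6 : ln (rho p / p) = ln s - ln (s + t) - 2 * ln s).
  { rewrite ln_div by lra. rewrite E1, Lp. ring. }
  assert (E7 : ln ((1 - rho p) / (1 - p)) = ln t - ln (s + t) - 2 * ln t).
  { rewrite ln_div by lra. rewrite E2, Lq. ring. }
  unfold A, E0, Defs.D, Rcrit, h, log2.
  rewrite E3, E4, E5, E6, E7, E1, E2.
  field. lra.
Qed.
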